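(* Let $q\ge2$ be even and $n\ge1$. There exists a code $\mathcal{C}\subseteq\Sigma_q^n$ capable of correcting a reverse-complement duplication of arbitrary length (i.e. $RC_k^1(\boldsymbol{x})\cap RC_k^1(\boldsymbol{z})=\varnothing$ for all distinct $\boldsymbol{x},\boldsymbol{z}\in\mathcal{C}$ and all $k\ge1$) with at most $3\log_q n$ redundant symbols, i.e. $n-\log_q|\mathcal{C}|\le 3\log_q n$.
   Context: $\Sigma_q=\{0,\dots,q-1\}$. A complement operation is a fixed bijection $a\mapsto\overline{a}$ on $\Sigma_q$ with $\overline{a}\ne a$, $\overline{\overline{a}}=a$; $\boldsymbol{v}^{RC}=\overline{v_k}\cdots\overline{v_1}$ for $\boldsymbol{v}=v_1\cdots v_k$. For $\boldsymbol{x}=\boldsymbol{u}\boldsymbol{v}\boldsymbol{w}\in\Sigma_q^n$ with $|\boldsymbol{u}|=i-1$, $|\boldsymbol{v}|=k$, $RC_{k,i}(\boldsymbol{x})=\boldsymbol{u}\boldsymbol{v}\boldsymbol{v}^{RC}\boldsymbol{w}$, and $RC_k^1(\boldsymbol{x})=\{RC_{k,i}(\boldsymbol{x}):i\in[1,n-k+1]\}$ (empty if $k>n$). *)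

(* Defs.v *)
From mathcomp Require Import all_boot all_order all_algebra.
From mathcomp Require Import reals exp.
Set Implicit Arguments. Unset Strict Implicit. Unset Printing Implicit Defensive.

Definition is_complement (q : nat) (c : 'I_q -> 'I_q) : Prop :=
  (forall a, c a != a) /\ (forall a, c (c a) = a).

Definition revcomp (q : nat) (c : 'I_q -> 'I_q) (v : seq 'I_q) : seq 'I_q :=
  rev (map c v).

(* RC_{k,i}(x) = u v v^RC w with |u| = i-1, |v| = k  (i is 1-based) *)
Definition RC_dup (q : nat) (c : 'I_q -> 'I_q) (k i : nat) (x : seq 'I_q)
  : seq 'I_q :=
  let u := take i.-1 x in
  let v := take k (drop i.-1 x) in
  let w := drop (i.-1 + k) x in
  u ++ v ++ revcomp c v ++ w.

Definition in_RC1 (q : nat) (c : 'I_q -> 'I_q) (k : nat) (x y : seq 'I_q)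
  : Prop :=
  exists i : nat, [/\ 1 <= i, i <= size x - k + 1, k <= size x &
                      y = RC_dup c k i x].

(* Main.v *)
Require Import Defs.
From mathcomp Require Import all_boot all_order all_algebra.
From mathcomp Require Import reals exp.
From mathcomp Require Import ring lra zify.
Import Order.TTheory GRing.Theory Num.Theory.

Lemma greedy (T : finType) (P : T -> T -> Prop) (N : T -> {set T}) (D : nat) :
  (forall x, x \in N x) -> (forall x, #|N x| <= D) ->
  (forall x z, P x z -> z \in N x) -> (forall x z, P x z -> P z x) ->
  forall S : {set T}, exists C : {set T},
    [/\ C \subset S, #|S| <= #|C| * D &
        forall x z, x \in C -> z \in C -> x != z -> ~ P x z].
Proof.
move=> Nx ND PN Psym S.
have [m] := ubnP #|S|; elim: m S => [|m IH] S; first by [].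
move=> Sm.
have [->|[x xS]] := set_0Vmem S.
  exists set0; split; [exact: sub0set | by rewrite cards0 | by move=> ? ?; rewrite inE].
have S'm : #|S :\: N x| < m.
  have : #|S :\: N x| < #|S|.
    apply: proper_card.
    apply/properP; split; first exact: subsetDl.
    by exists x => //; rewrite inE Nx.
  move=> h; exact: leq_trans h _.
have [C' [sC' cC' pC']] := IH _ S'm.
exists (x |: C'); split.
- by rewrite subUset sub1set xS (subset_trans sC') // subsetDl.
- have xC' : x \notin C'.
    apply/negP => /(subsetP sC'); by rewrite inE Nx.
  rewrite cardsU1 xC' /= mulSn.
  rewrite -(cardsID (N x) S).
  rewrite leq_add //; apply: leq_trans (ND x); apply: subset_leq_card; exact: subsetIr.
- have key : forall a, a \in C' -> ~ P x a.
    move=> a aC /PN aN; move: (subsetP sC' a aC); by rewrite inE aN.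
  move=> a b; rewrite !inE => /orP[/eqP->|aC] /orP[/eqP->|bC] ab.
  + by rewrite eqxx in ab.
  + exact: key bC.
  + move=> /Psym; exact: key aC.
  + exact: pC'.
Qed.

Definition del {T : Type} (k j : nat) (y : seq T) : seq T :=
  take (j.-1 + k) y ++ drop (j.-1 + k + k) y.

Lemma del_RC (q : nat) (c : 'I_q -> 'I_q) k j (s : seq 'I_q) :
  j.-1 + k <= size s -> del k j (RC_dup c k j s) = s.
Proof.
move=> h; rewrite /del /RC_dup.
have s1 : size (take j.-1 s ++ take k (drop j.-1 s)) = j.-1 + k.
  rewrite size_cat size_takel; last lia.
  by rewrite size_takel // size_drop; lia.
rewrite catA take_size_cat // -catA.
have -> : j.-1 + k + k = size (revcomp c (take k (drop j.-1 s))) + size (take j.-1 s ++ take k (drop j.-1 s)).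
  rewrite s1 /revcomp size_rev size_map size_takel; [lia|rewrite size_drop; lia].
rewrite -drop_drop drop_size_cat // drop_size_cat //.
by rewrite addnC -drop_drop !cat_take_drop.
Qed.

Theorem lemma7 (R : realType) (q n : nat) (c : 'I_q -> 'I_q) :
  2 <= q -> ~~ odd q -> 1 <= n -> is_complement c ->
  exists C : {set n.-tuple 'I_q},
    [/\ 0 < #|C|,
        (forall (x z : n.-tuple 'I_q), x \in C -> z \in C -> x != z ->
           forall k : nat, 1 <= k ->
           forall y : seq 'I_q, ~ (in_RC1 c k x y /\ in_RC1 c k z y)) &
        (((n%:R : R) - ln (#|C|%:R) / ln (q%:R) <= 3 * (ln (n%:R) / ln (q%:R)))%R)].
Proof.
move=> q2 _ n1 _.
pose f (x : n.-tuple 'I_q) (t : 'I_n * 'I_n * 'I_n) : n.-tuple 'I_q :=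
  let: (k, i, j) := t in insubd x (del k.+1 j.+1 (RC_dup c k.+1 i.+1 x)).
pose N x := f x @: [set: 'I_n * 'I_n * 'I_n].
pose P (x z : n.-tuple 'I_q) :=
  exists k, 1 <= k /\ exists y, in_RC1 c k x y /\ in_RC1 c k z y.
have PN : forall x z, P x z -> z \in N x.
  move=> x z [k [k1 [y [[i [i1 ii kn ey]] [j [j1 jj _ ey']]]]]].
  rewrite size_tuple in ii kn; rewrite size_tuple in jj.
  have kn' : k.-1 < n by lia.
  have ii' : i.-1 < n by lia.
  have jj' : j.-1 < n by lia.
  apply/imsetP; exists (Ordinal kn', Ordinal ii', Ordinal jj'); first by rewrite inE.
  rewrite /f /=; apply: val_inj; rewrite val_insubd.
  rewrite !prednK //.
  rewrite -ey ey' del_RC ?size_tuple ?eqxx //; lia.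
have Nx : forall x, x \in N x.
  move=> x; apply: PN; exists 1; split=> //; exists (RC_dup c 1 1 x).
  have h : in_RC1 c 1 x (RC_dup c 1 1 x).
    by exists 1; split=> //; rewrite size_tuple; lia.
  by split.
have ND : forall x, #|N x| <= n * n * n.
  move=> x; apply: leq_trans (leq_imset_card _ _) _.
  by rewrite cardsT !card_prod !card_ord.
have Psym : forall x z, P x z -> P z x.
  by move=> x z [k [k1 [y [h1 h2]]]]; exists k; split=> //; exists y.
have [C [_ cC pC]] := @greedy _ P N _ Nx ND PN Psym [set: n.-tuple 'I_q].
rewrite cardsT card_tuple card_ord in cC.
have qn : 0 < q ^ n by rewrite expn_gt0; lia.
have C0 : 0 < #|C|.
  by case: #|C| cC => [|m] //; rewrite mul0n; lia.
exists C; split=> //.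
  move=> x z xC zC xz k k1 y [hx hz]; apply: (pC x z xC zC xz).
  by exists k; split=> //; exists y.
have H : ((q ^ n)%:R <= (#|C| * (n * n * n))%:R :> R)%R by rewrite ler_nat.
have Cr : (0 < #|C|%:R :> R)%R by rewrite ltr0n.
have nr : (0 < n%:R :> R)%R by rewrite ltr0n.
have qr : (0 < q%:R :> R)%R by rewrite ltr0n; lia.
have L0 : (0 < ln (q%:R : R))%R by apply: ln_gt0; rewrite ltr1n.
have : (ln ((q ^ n)%:R : R) <= ln ((#|C| * (n * n * n))%:R : R))%R.
  by rewrite ler_ln // posrE ltr0n ?muln_gt0 ?C0 /=; lia.
move=> HL; rewrite natrX lnXn // !natrM !lnM ?posrE ?mulr_gt0 // in HL.
rewrite ?mul1r -mulr_natr in HL.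
set L := ln (q%:R : R) in L0 HL *.
set a := ln (#|C|%:R : R) in HL *.
set b := ln (n%:R : R) in HL *.
have -> : (n%:R - a / L = (n%:R * L - a) * L^-1 :> R)%R.
  by field; rewrite gt_eqF.
have -> : (3 * (b / L) = (3 * b) * L^-1 :> R)%R by rewrite mulrA.
rewrite ler_pM2r ?invr_gt0 //.
rewrite mulrC. move: HL. rewrite -[X in ln X](natrM _ 1 q) mul1n. rewrite -/L -mulr_natr; lra.
Qed.
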